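(* Let $A \in \mathbb{R}^{d\times d}$ be invertible, $\bm{b}\in\mathbb{R}^d$, $\bm{x}^\ast=A^{-1}\bm{b}$, $\bm{x}_0\in\mathbb{R}^d$ with $\bm{x}_0\neq\bm{x}^\ast$, and $\Sigma_0$ symmetric positive-definite. Let $S_m\in\mathbb{R}^{d\times m}$ have linearly independent columns, $\Lambda_m=S_m^\top A\Sigma_0A^\top S_m$, $\bm{r}_0=\bm{b}-A\bm{x}_0$, and \[\bm{x}_m=\bm{x}_0+\Sigma_0A^\top S_m\Lambda_m^{-1}S_m^\top\bm{r}_0,\qquad \Sigma_m=\Sigma_0-\Sigma_0A^\top S_m\Lambda_m^{-1}S_m^\top A\Sigma_0.\] Then \[\frac{\|\bm{x}_m-\bm{x}^\ast\|_{\Sigma_0^{-1}}}{\|\bm{x}_0-\bm{x}^\ast\|_{\Sigma_0^{-1}}}\le\sqrt{\operatorname{tr}(\Sigma_m\Sigma_0^{-1})}.\]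
   Context: For a symmetric positive-definite matrix $M$, $\|\bm{v}\|_M=\sqrt{\bm{v}^\top M\bm{v}}$. $\bm{x}_m,\Sigma_m$ are the mean and covariance of the posterior obtained by conditioning the prior $\mathcal{N}(\bm{x}_0,\Sigma_0)$ on $S_m^\top A\bm{x}=S_m^\top\bm{b}$. *)

(* Defs.v *)
From HB Require Import structures.
From mathcomp Require Import all_boot all_order all_algebra.
Set Implicit Arguments. Unset Strict Implicit. Unset Printing Implicit Defensive.
Import Order.TTheory GRing.Theory Num.Theory.
Local Open Scope ring_scope.

Definition spd (R : realFieldType) (n : nat) (M : 'M[R]_n) : Prop :=
  M^T = M /\ forall v : 'cV[R]_n, v != 0 -> 0 < (v^T *m M *m v) ord0 ord0.

Definition mnorm (R : rcfType) (n : nat) (M : 'M[R]_n) (v : 'cV[R]_n) : R :=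
  Num.sqrt ((v^T *m M *m v) ord0 ord0).

(* Main.v *)
Require Import Defs.
From HB Require Import structures.
From mathcomp Require Import all_boot all_order all_algebra.
From mathcomp Require Import ring lra.
Import Order.TTheory GRing.Theory Num.Theory.
Local Open Scope ring_scope.
Set Implicit Arguments. Unset Strict Implicit.

Lemma spd_psd (R : rcfType) n (S : 'M[R]_n) (w : 'cV_n) : spd S -> 0 <= (w^T *m S *m w) ord0 ord0.
Proof.
move=> [_ hS]; have [->|w0] := eqVneq w 0.
  by rewrite mulmx0 mxE.
exact/ltW/hS.
Qed.

Lemma spd_zero (R : rcfType) n (S : 'M[R]_n) (w : 'cV_n) : spd S -> (w^T *m S *m w) ord0 ord0 = 0 -> w = 0.
Proof.
move=> [_ hS] h; apply/eqP; apply/negPn/negP => /hS; by rewrite h ltxx.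
Qed.

Lemma spd_unit (R : rcfType) n (S : 'M[R]_n) : spd S -> S \in unitmx.
Proof.
move=> hS; rewrite -row_free_unit; apply: inj_row_free => v hv.
have := @spd_zero _ _ _ v^T hS; rewrite trmxK hv mul0mx mxE; move=> /(_ erefl) h.
by rewrite -(trmxK v) h trmx0.
Qed.

Lemma spd_inv (R : rcfType) n (S : 'M[R]_n) : spd S -> spd (invmx S).
Proof.
move=> hS; have hU := spd_unit hS; have [hT hP] := hS.
split; first by rewrite trmx_inv hT.
move=> v v0; set w := invmx S *m v.
have w0 : w != 0.
  apply: contra v0 => /eqP hw; by rewrite -(mulKVmx hU v) -/w hw mulmx0.
have := hP w w0; rewrite /w trmx_mul trmx_inv hT.
by rewrite -!mulmxA (mulmxA S) (mulmxV hU) mul1mx.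
Qed.

Lemma lam_unit (R : rcfType) n m (S : 'M[R]_n) (C : 'M[R]_(m, n)) :
  spd S -> row_free C -> (C *m S *m C^T) \in unitmx.
Proof.
move=> hS hC; rewrite -row_free_unit; apply: inj_row_free => u hu.
have h : (C^T *m u^T) = 0.
  apply: (spd_zero hS); rewrite trmx_mul !trmxK.
  have -> : u *m C *m S *m (C^T *m u^T) = (u *m (C *m S *m C^T)) *m u^T by rewrite !mulmxA.
  by rewrite hu mul0mx mxE.
apply: (row_free_inj hC); rewrite mul0mx.
by rewrite -(trmxK (u *m C)) trmx_mul h trmx0.
Qed.

Theorem proposition2 (R : rcfType) (d m : nat)
  (A : 'M[R]_d) (b x0 : 'cV[R]_d) (Sigma0 : 'M[R]_d) (S : 'M[R]_(d, m)) :
  A \in unitmx ->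
  x0 != invmx A *m b ->
  spd Sigma0 ->
  \rank S = m ->
  let xstar := invmx A *m b in
  let Lambda := S^T *m A *m Sigma0 *m A^T *m S in
  let r0 := b - A *m x0 in
  let xm := x0 + Sigma0 *m A^T *m S *m invmx Lambda *m S^T *m r0 in
  let Sigmam := Sigma0 - Sigma0 *m A^T *m S *m invmx Lambda *m S^T *m A *m Sigma0 in
  mnorm (invmx Sigma0) (xm - xstar) / mnorm (invmx Sigma0) (x0 - xstar)
    <= Num.sqrt (\tr (Sigmam *m invmx Sigma0)).
Proof.
move=> hA hx hS hr; cbv zeta.
set xstar := invmx A *m b.
set Lambda := S^T *m A *m Sigma0 *m A^T *m S.
set r0 := b - A *m x0.
set xm := x0 + _.
set Sigmam := Sigma0 - _.
have hSU := spd_unit hS.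
have [hST _] := hS.
set C := S^T *m A.
have hC : row_free C.
  by rewrite /row_free mxrankMfree ?row_free_unit // mxrank_tr hr.
have CT : C^T = A^T *m S by rewrite trmx_mul trmxK.
have hL : Lambda = C *m Sigma0 *m C^T by rewrite CT /Lambda /C !mulmxA.
have hLU : Lambda \in unitmx by rewrite hL; exact: lam_unit.
have LT : Lambda^T = Lambda.
  by rewrite hL /C !trmx_mul !trmxK hST !mulmxA.
set Li := invmx Lambda.
have LiT : Li^T = Li by rewrite /Li trmx_inv LT.
set K := C^T *m Li *m C.
have KT : K^T = K by rewrite /K /C !trmx_mul !trmxK LiT !mulmxA.
have KSK : K *m Sigma0 *m K = K.
  have -> : K *m Sigma0 *m K = C^T *m Li *m (C *m Sigma0 *m C^T) *m Li *m C by rewrite /K !mulmxA.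
  by rewrite -hL /Li mulmxKV.
set e := x0 - xstar.
have e0 : e != 0 by rewrite /e subr_eq0.
have hem : xm - xstar = e - Sigma0 *m K *m e.
  have hr0 : r0 = - (A *m e).
    by rewrite /r0 /e mulmxBr /xstar mulKVmx // opprB.
  rewrite /xm hr0 mulmxN /e /K CT /C !mulmxA; set u := (X in x0 + X); rewrite -/u. 
  rewrite addrAC; congr (_ - _ + _); by rewrite /u !mulmxA.
have hSm : Sigmam *m invmx Sigma0 = 1%:M - Sigma0 *m K.
  have -> : Sigmam = Sigma0 - Sigma0 *m K *m Sigma0 by rewrite /Sigmam /K CT /C !mulmxA.
  by rewrite mulmxBl mulmxV // mulmxK.
have htr : \tr (Sigmam *m invmx Sigma0) = d%:R - m%:R.
  have h1 : \tr (Sigma0 *m K) = \tr (Lambda *m Li).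
    by rewrite hL /K (mxtrace_mulC Sigma0) -(mulmxA (C^T *m Li)) (mxtrace_mulC (C^T *m Li)) mulmxA.
  by rewrite hSm linearB /= mxtrace1 h1 /Li mulmxV // mxtrace1.
set M := invmx Sigma0.
have hMS : M *m Sigma0 = 1%:M by rewrite /M mulVmx.
have PT : (1%:M - Sigma0 *m K)^T *m M = M - K.
  have -> : (1%:M - Sigma0 *m K)^T = 1%:M - K *m Sigma0 by rewrite linearB /= trmx1 trmx_mul KT hST.
  by rewrite mulmxBl mul1mx -mulmxA mulmxV // mulmx1.
have PMP : (M - K) *m (1%:M - Sigma0 *m K) = M - K.
  rewrite mulmxBr mulmx1 mulmxBl mulmxA hMS mul1mx mulmxA KSK subrr subr0 //.
have hemP : xm - xstar = (1%:M - Sigma0 *m K) *m e by rewrite hem mulmxBl mul1mx.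
have hq : (xm - xstar)^T *m M *m (xm - xstar) = e^T *m M *m e - e^T *m K *m e.
  have -> : (xm - xstar)^T *m M *m (xm - xstar) = e^T *m (((1%:M - Sigma0 *m K)^T *m M) *m (1%:M - Sigma0 *m K)) *m e.
    by rewrite hemP trmx_mul !mulmxA.
  by rewrite PT PMP (mulmxBr e^T M K) (mulmxBl (e^T *m M) (e^T *m K) e).
have hk : 0 <= (e^T *m K *m e) ord0 ord0.
  have -> : e^T *m K *m e = (K *m e)^T *m Sigma0 *m (K *m e).
    by rewrite trmx_mul KT -{1}KSK !mulmxA.
  exact: spd_psd.
have hq0 : 0 < (e^T *m M *m e) ord0 ord0 by have [_ ] := spd_inv hS; apply.
rewrite /mnorm -/M hq htr -/e mxE [X in _ + X]mxE.
set q0 := (e^T *m M *m e) ord0 ord0.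
set k := (e^T *m K *m e) ord0 ord0.
rewrite ler_pdivrMr ?sqrtr_gt0 //.
have : (m <= d)%N by rewrite -hr rank_leq_row.
rewrite leq_eqVlt => /orP [/eqP hmd | hmd].
  have hfull : row_full C by rewrite /row_full (eqP hC); apply/eqP.
  have [D hD] := row_fullP hfull.
  have hD' : C^T *m D^T = 1%:M by rewrite -trmx_mul hD trmx1.
  have KS1 : K *m Sigma0 = 1%:M.
    rewrite -[LHS]mulmx1 -hD'.
    have -> : K *m Sigma0 *m (C^T *m D^T) = C^T *m Li *m (C *m Sigma0 *m C^T) *m D^T by rewrite /K !mulmxA.
    by rewrite -hL /Li mulmxKV.
  have KM : K = M by rewrite -[K]mulmx1 -(mulmxV (spd_unit hS)) mulmxA KS1 mul1mx.
  by rewrite /k KM -/q0 subrr sqrtr0 mulr_ge0 // sqrtr_ge0.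
have h1 : 1 <= d%:R - m%:R :> R.
  have : (m.+1)%:R <= d%:R :> R by rewrite ler_nat.
  rewrite -addn1 natrD; lra.
apply: (le_trans (y := Num.sqrt q0)).
  by rewrite ler_sqrt ?gerBl // ltW.
rewrite -[X in X <= _]mul1r ler_wpM2r ?sqrtr_ge0 //.
rewrite -{1}sqrtr1 ler_sqrt //; lra.
Qed.
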